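(* Let $(E,\rho)$ be a weighted space and $(P(t))_{t\ge0}$ a generalized Feller semigroup on $\mathscr{B}^\rho(E)$, with associated measures $p(t)(x,\cdot)$. Let $\hat p(t)$ be the restriction of $p(t)$ to $E\times\mathcal{B}_0(E)$. Then for every $t\ge0$ and $A\in\mathcal{B}_0(E)$ the map $x\mapsto \hat p(t)(x,A)$ is $\mathcal{B}_0(E)$-measurable, and for all $s,t\ge0$, $x\in E$, $A\in\mathcal{B}_0(E)$, $$\int_E \hat p(s)(y,A)\,\hat p(t)(x,dy)=\hat p(s+t)(x,A),$$ i.e. $(\hat p(t))_{t\ge0}$ is a semigroup of transition kernels on $(E,\mathcal{B}_0(E))$.
   Context: A weighted space is a pair $(E,\rho)$ where $E$ is a completely regular Hausdorff topological space and $\rho:E\to(0,\infty)$ is an admissible weight function, meaning that for every $R\ge 0$ the sublevel set $K_R:=\{x\in E:\rho(x)\le R\}$ is compact. For $f:E\to\mathbb{R}$ put $\|f\|_\rho:=\sup_{x\in E}|f(x)|/\rho(x)$; $\mathscr{B}^\rho(E)$ denotes the closure of $C_b(E)$ with respect to $\|\cdot\|_\rho$ inside $\{f:E\to\mathbb{R}:\|f\|_\rho<\infty\}$. A generalized Feller semigroup on $\mathscr{B}^\rho(E)$ is a family $(P(t))_{t\ge0}$ of bounded linear operators on $\mathscr{B}^\rho(E)$ such that (P1) $P(0)=\mathrm{Id}$; (P2) $P(t+s)=P(s)P(t)$ for all $s,t\ge0$; (P3) $\lim_{t\downarrow0}P(t)f(x)=f(x)$ for all $f\in\mathscr{B}^\rho(E)$,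 $x\in E$; (P4) there exist $\varepsilon>0$, $C<\infty$ with $\|P(t)\|_{L(\mathscr{B}^\rho(E))}\le C$ for all $t\in[0,\varepsilon]$; (P5) each $P(t)$ is a positive operator. For each $t\ge 0$, $x\in E$ there is a unique positive finite Radon measure $p(t)(x,\cdot)$ on the Borel σ-algebra $\mathcal{B}(E)$ with $\int\rho\,dp(t)(x,\cdot)<\infty$ and $P(t)f(x)=\int_E f(y)\,p(t)(x,dy)$ for all $f\in\mathscr{B}^\rho(E)$. The Baire σ-algebra $\mathcal{B}_0(E)$ is the smallest σ-algebra on $E$ making all bounded continuous functions measurable. *)

(* Defs.v *)
From HB Require Import structures.
From mathcomp Require Import all_boot all_order all_algebra.
From mathcomp Require Import all_classical all_reals all_analysis.
From mathcomp Require Import measurable_realfun.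
Set Implicit Arguments. Unset Strict Implicit. Unset Printing Implicit Defensive.
Import Order.TTheory GRing.Theory Num.Theory.
Import numFieldNormedType.Exports.
Local Open Scope classical_set_scope.
Local Open Scope ring_scope.

Definition admissible_weight (R : realType) (E : topologicalType) (rho : E -> R) :=
  (forall x, 0 < rho x) /\ (forall r : R, 0 <= r -> compact [set x | rho x <= r]).

Definition Cb (R : realType) (E : topologicalType) (f : E -> R) :=
  continuous f /\ exists M : R, forall x, `|f x| <= M.

(* f has rho-norm at most M, i.e. sup_x |f x| / rho x <= M *)
Definition rho_bounded_by (R : realType) (E : Type) (rho : E -> R) (f : E -> R) (M : R) :=
  forall x, `|f x| <= M * rho x.

(* B^rho(E): the closure of C_b(E) w.r.t. ||.||_rho within functions of finite
   rho-norm. *)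
Definition Brho (R : realType) (E : topologicalType) (rho : E -> R) (f : E -> R) :=
  (exists M, rho_bounded_by rho f M) /\
  forall eps : R, 0 < eps -> exists g, Cb g /\ rho_bounded_by rho (f \- g) eps.

(* Generalized Feller semigroup on B^rho(E); P t is only relevant on B^rho(E)
   and for t >= 0. *)
Definition generalized_Feller (R : realType) (E : topologicalType) (rho : E -> R)
    (P : R -> (E -> R) -> (E -> R)) :=
  (forall t, 0 <= t -> forall f, Brho rho f -> Brho rho (P t f)) /\
  (forall t, 0 <= t -> forall f g (a b : R), Brho rho f -> Brho rho g ->
      P t (fun x => a * f x + b * g x) = (fun x => a * P t f x + b * P t g x)) /\
  (forall t, 0 <= t -> exists C : R, forall f M, Brho rho f ->
      rho_bounded_by rho f M -> rho_bounded_by rho (P t f) (C * M)) /\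
  (forall f, Brho rho f -> P 0 f = f) /\
  (forall s t, 0 <= s -> 0 <= t -> forall f, Brho rho f -> P (t + s) f = P s (P t f)) /\
  (forall f, Brho rho f -> forall x, (fun t => P t f x) @ at_right 0 --> f x) /\
  (exists eps C : R, 0 < eps /\ forall t, 0 <= t <= eps -> forall f M, Brho rho f ->
      rho_bounded_by rho f M -> rho_bounded_by rho (P t f) (C * M)) /\
  (forall t, 0 <= t -> forall f, Brho rho f -> (forall x, 0 <= f x) ->
      forall x, 0 <= P t f x).

Definition BorelSigma (E : ptopologicalType) := g_sigma_algebraType (@open E).

Definition BaireGen (R : realType) (E : ptopologicalType) : set (set E) :=
  [set A | exists f : E -> R, Cb f /\ exists B : set R, measurable B /\ A = f @^-1` B].
Definition BaireSigma (R : realType) (E : ptopologicalType) := g_sigma_algebraType (@BaireGen R E).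

Definition finite_Radon (R : realType) (E : ptopologicalType)
    (mu : {measure set (BorelSigma E) -> \bar R}) :=
  (mu setT < +oo)%E /\
  forall B : set (BorelSigma E), measurable B ->
    mu B = ereal_sup [set mu K | K in [set K : set E | compact K /\ K `<=` B]].

(* Main.v *)
Require Import Defs.
From HB Require Import structures.
From mathcomp Require Import all_boot all_order all_algebra.
From mathcomp Require Import all_classical all_reals all_analysis.
From mathcomp Require Import measurable_realfun.
Import Order.TTheory GRing.Theory Num.Theory.
Import numFieldNormedType.Exports.
Local Open Scope classical_set_scope.
Local Open Scope ring_scope.

Set Implicit Arguments. Unset Strict Implicit.
Section S.
Variables (R : realType) (E : ptopologicalType).
Local Notation Borel := (BorelSigma E).
Local Notation Baire := (BaireSigma R E).

Lemma cont_mfun_borel (f : E -> R) : continuous f -> measurable_fun [set: Borel] f.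
Proof.
move=> cf; apply: (@measurability _ _ Borel R _ f (@RGenOInfty.G R)); first exact: RGenOInfty.measurableE.
move=> _ [_ [a ->] <-]; rewrite setTI; apply: sub_sigma_algebra.
move/continuousP : cf; apply.
exact: itv_open_ends_open.
Qed.

Lemma Cb_pre_baire (f : E -> R) (B : set R) : Cb f -> measurable B ->
  measurable (f @^-1` B : set Baire).
Proof. by move=> cf mB; apply: sub_sigma_algebra; exists f; split => //; exists B. Qed.

Lemma Cb_mfun_baire (f : E -> R) : Cb f -> measurable_fun [set: Baire] f.
Proof. by move=> cf _ B mB; rewrite setTI; exact: Cb_pre_baire. Qed.

Lemma baire_borel (A : set E) : measurable (A : set Baire) -> measurable (A : set Borel).
Proof.
move=> mA; apply: (smallest_sub _ _ mA).
  exact: smallest_sigma_algebra.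
move=> _ [f [cf [B [mB ->]]]].
have := @cont_mfun_borel f (proj1 cf) measurableT _ mB; by rewrite setTI.
Qed.

Lemma mfun_baire_borel (f : E -> \bar R) : measurable_fun [set: Baire] f ->
  measurable_fun [set: Borel] f.
Proof. by move=> mf _ B mB; apply: baire_borel; exact: mf. Qed.


Definition Coz := [set A : set E | exists h : E -> R, Cb h /\ A = [set x | 0 < h x]].

Lemma coz_pre (h : E -> R) : [set x | 0 < h x] = h @^-1` `]0, +oo[.
Proof. by apply/seteqP; split=> x /=; rewrite in_itv /= andbT. Qed.

Lemma coz_baire : Coz `<=` (measurable : set (set Baire)).
Proof.
move=> _ [h [ch ->]]; rewrite coz_pre; apply: Cb_pre_baire => //.
Qed.

Lemma CbB (f : E -> R) (a : R) : Cb f -> Cb (fun x => f x - a).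
Proof.
move=> [cf [M hM]]; split.
  by move=> x; apply: cvgB; [exact: cf|exact: cvg_cst].
exists (M + `|a|) => x; rewrite (le_trans (ler_normB _ _))// lerD2r; exact: hM.
Qed.

Lemma Cbmin (f g : E -> R) : Cb f -> Cb g -> Cb (f \min g).
Proof.
move=> [cf [M hM]] [cg [N hN]]; split.
  exact: min_fun_continuous.
exists (M + N) => x /=; rewrite /Order.min; case: ifP => _.
  by rewrite (le_trans (hM x))// lerDl (le_trans _ (hN x)).
by rewrite (le_trans (hN x))// lerDr (le_trans _ (hM x)).
Qed.

Lemma coz_setI : setI_closed Coz.
Proof.
move=> _ _ [h [ch ->]] [g [cg ->]]; exists (h \min g); split; first exact: Cbmin.
apply/seteqP; split=> x /=.
  by move=> [h0 g0]; rewrite lt_min h0 g0.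
by rewrite lt_min => /andP[].
Qed.

Lemma baire_eq : (measurable : set (set Baire)) = <<s Coz >>.
Proof.
apply/seteqP; split; last first.
  apply: smallest_sub; first exact: smallest_sigma_algebra.
  exact: coz_baire.
apply: smallest_sub; first exact: smallest_sigma_algebra.
move=> _ [f [cf [B [mB ->]]]].
have mf : measurable_fun [set: g_sigma_algebraType Coz] f.
  apply: (@measurability _ _ (g_sigma_algebraType Coz) R _ f (@RGenOInfty.G R)).
    exact: RGenOInfty.measurableE.
  move=> _ [_ [a ->] <-]; rewrite setTI; apply: sub_sigma_algebra.
  exists (fun x => f x - a); split; first exact: CbB.
  by apply/seteqP; split=> x /=; rewrite in_itv /= andbT subr_gt0.
have := mf measurableT _ mB; by rewrite setTI.
Qed.


Definition phi (h : E -> R) (n : nat) (x : E) : R :=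
  Order.min 1 (n%:R * Order.max (h x) 0).

Lemma phi_ge0 h n x : 0 <= phi h n x.
Proof. by rewrite /phi le_min ler01 mulr_ge0// le_max lexx orbT. Qed.

Lemma phi_le1 h n x : phi h n x <= 1.
Proof. by rewrite /phi ge_min lexx. Qed.

Lemma phi_nd h x : nondecreasing_seq (phi h ^~ x).
Proof.
move=> m n mn; rewrite /phi le_min ge_min lexx /= ge_min.
by rewrite ler_wpM2r ?orbT// ?le_max ?lexx ?orbT// ler_nat.
Qed.

Lemma Cb_phi h n : Cb h -> Cb (phi h n).
Proof.
move=> [ch _]; split; last first.
  by exists 1 => x; rewrite ger0_norm ?phi_ge0 ?phi_le1.
have c2 : continuous (fun x => n%:R * Order.max (h x) 0).
  have c3 : continuous (h \max (@cst E R 0)).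
    by apply: max_fun_continuous => // z; exact: cvg_cst.
  move=> y; apply: cvgM; first exact: cvg_cst.
  exact: c3.
have c1 : continuous (@cst E R 1) by move=> y; exact: cvg_cst.
exact: (min_fun_continuous c1 c2).
Qed.

Lemma phi_cvg h x :
  (fun n => (phi h n x)%:E) @ \oo --> (\1_[set y | 0 < h y] x)%:E.
Proof.
apply: cvg_near_cst; rewrite /indic /=.
have [hx|hx] := ltP 0 (h x).
  have -> : (x \in [set y | 0 < h y]) = true by apply/mem_set.
  exists (Num.Def.trunc (h x)^-1).+1 => // n /= kn.
  congr (_%:E); rewrite /phi (max_l (ltW hx)); apply/min_l.
  rewrite -(ler_pdivrMr _ _ hx) mul1r (le_trans (ltW (truncnS_gt _)))//.
  by rewrite ler_nat.
have -> : (x \in [set y | 0 < h y]) = false.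
  by apply/negbTE/negP; rewrite inE /= => /(le_lt_trans hx); rewrite ltxx.
exists 0%N => // n _; congr (_%:E); rewrite /phi (max_r hx) mulr0.
by apply/min_r.
Qed.

Lemma phi_mct (mu : {measure set Borel -> \bar R}) (h : E -> R) : Cb h ->
  (fun n => \int[mu]_y (phi h n y)%:E)%E @ \oo --> mu [set x | 0 < h x].
Proof.
move=> ch.
have mA : measurable ([set x | 0 < h x] : set Borel).
  by apply: baire_borel; apply: coz_baire; exists h.
have mg n : measurable_fun [set: Borel] (fun y => (phi h n y)%:E).
  by apply/measurable_EFinP; apply: cont_mfun_borel; exact: (proj1 (@Cb_phi h n ch)).
have := @cvg_monotone_convergence _ Borel R mu setT measurableT
  (fun n y => (phi h n y)%:E) mg (fun n y _ => phi_ge0 h n y)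
  (fun y _ m n mn => @phi_nd h y m n mn).
suff -> : (\int[mu]_(x in setT) limn ((fun n y => (phi h n y)%:E)^~ x))%E = mu [set x | 0 < h x] by [].
rewrite -[in RHS](setIT [set x | 0 < h x]) -integral_indic//; apply: eq_integral => y _.
exact/cvg_lim/phi_cvg.
Qed.


Lemma Brho_mfun (rho : E -> R) (f : E -> R) : Brho rho f ->
  measurable_fun [set: Baire] f.
Proof.
move=> [_ hf].
have /choice[g hg] : forall n, exists g, Cb g /\ rho_bounded_by rho (f \- g) (harmonic n).
  by move=> n; apply: hf; exact: harmonic_gt0.
apply: (@measurable_fun_cvg _ Baire R setT g) => [m|x _].
  exact: Cb_mfun_baire (hg m).1.
have hcv : (fun n => harmonic n * rho x) @ \oo --> (0 : R).
  by rewrite -(mul0r (rho x)); apply: cvgMl; exact: cvg_harmonic.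
apply/cvgrPdist_le => e e0.
near=> n.
have hn : `|harmonic n * rho x| <= e by near: n; exact: (cvgr0_norm_le _ hcv _ e0).
rewrite (le_trans _ hn)// (le_trans (proj2 (hg n) x))//.
exact: ler_norm.
Unshelve. all: by end_near. Qed.


Lemma rho_lb (rho : E -> R) : hausdorff_space E -> admissible_weight rho ->
  exists c : R, 0 < c /\ forall x, c <= rho x.
Proof.
move=> hE [rpos rcpt].
apply: contrapT => /forallNP H.
have ne n : exists x, rho x < n.+1%:R^-1.
  apply: contrapT => /forallNP hn; apply: (H n.+1%:R^-1); split => // x.
  by rewrite leNgt; apply/negP => /hn.
pose K n := [set x | rho x <= n.+1%:R^-1].
have Ff : Filter (filter_from [set: nat] K).
  apply: filter_from_filter; first by exists 0%N.
  move=> i j _ _; exists (maxn i j) => // x; rewrite /K /= => hx; split.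
    by rewrite (le_trans hx)// lef_pV2 ?posrE// ler_nat ltnS leq_maxl.
  by rewrite (le_trans hx)// lef_pV2 ?posrE// ler_nat ltnS leq_maxr.
have PF : ProperFilter (filter_from [set: nat] K).
  apply: filter_from_proper => n _; have [x hx] := ne n; exists x.
  exact: ltW.
have FK : filter_from [set: nat] K [set x | rho x <= 1].
  by exists 0%N => // x; rewrite /K /= invr1.
have [p [_ cp]] := rcpt 1 ler01 _ PF FK.
rewrite clusterE in cp.
have hp n : rho p <= n.+1%:R^-1.
  have : closure (K n) p by apply: cp; exists n.
  apply: (compact_closed hE (rcpt _ _)).
  by rewrite invr_ge0.
have := hp (Num.Def.trunc (rho p)^-1).
rewrite leNgt => /negP; apply.
rewrite -[X in _ < X](invrK (rho p)) ltf_pV2 ?posrE ?invr_gt0 ?rpos//.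
exact: truncnS_gt.
Qed.


Lemma Cb_Brho (rho : E -> R) (c : R) : 0 < c -> (forall x, c <= rho x) ->
  forall f, Cb f -> Brho rho f.
Proof.
move=> c0 hc f [cf [M hM]]; split.
  exists (`|M| / c) => x; rewrite (le_trans (hM x)) ?(le_trans (ler_norm M))//.
  rewrite -mulrA ler_peMr// ler_pdivlMl// mulr1; exact: hc.
move=> e e0; exists f; split; first by split => //; exists M.
move=> x; rewrite /= subrr normr0 mulr_ge0 ?(ltW e0)//.
exact: (le_trans (ltW c0) (hc x)).
Qed.

Lemma Cb1 : Cb (@cst E R 1).
Proof. by split; [move=> x; exact: cvg_cst|exists 1 => x; rewrite normr1]. Qed.

Lemma setT_coz : [set: E] = [set x | 0 < (@cst E R 1) x].
Proof. by apply/seteqP; split => x //= _; exact: ltr01. Qed.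

Lemma mu_bigcupT (mu : {measure set Borel -> \bar R}) (F : nat -> set E) :
  (forall i, measurable (F i : set Borel)) -> trivIset setT F ->
  mu (\bigcup_k F k) = (\sum_(k <oo) mu (F k))%E.
Proof.
move=> mF tF; rewrite measure_bigcup//; apply: eq_eseriesl => // i.
by rewrite in_setT.
Qed.


Lemma mfun_baire_borelR (f : E -> R) : measurable_fun [set: Baire] f ->
  measurable_fun [set: Borel] f.
Proof. by move=> mf _ B mB; apply: baire_borel; exact: mf. Qed.

End S.

Unset Implicit Arguments.

Theorem mainTheorem4 (R : realType) (E : ptopologicalType) (rho : E -> R)
    (P : R -> (E -> R) -> (E -> R))
    (p : R -> E -> {measure set (BorelSigma E) -> \bar R}) :
  hausdorff_space E -> completely_regular_space E -> admissible_weight rho ->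
  generalized_Feller rho P ->
  (forall t, 0 <= t -> forall x, finite_Radon (p t x) /\
     (\int[p t x]_y (rho y)%:E < +oo)%E /\
     forall f, Brho rho f -> ((P t f x)%:E = \int[p t x]_y (f y)%:E)%E) ->
  (forall t, 0 <= t -> forall A : set (BaireSigma R E), measurable A ->
     measurable_fun [set: BaireSigma R E] (fun x : BaireSigma R E => p t x A)) /\
  (forall s t, 0 <= s -> 0 <= t -> forall (x : E) (A : set (BaireSigma R E)), measurable A ->
     (\int[p t x]_y (p s y A) = p (s + t)%R x A)%E).
Proof.
move=> hE _ adm [PB [_ [_ [_ [Psg [_ [_ Ppos]]]]]]] hp.
have [c [c0 hc]] := rho_lb hE adm.
have CbB := Cb_Brho c0 hc.
have key t (t0 : 0 <= t) x h (ch : Cb h) :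
    (fun n => (P t (phi h n) x)%:E) @ \oo --> p t x [set y | 0 < h y].
  have -> : (fun n => (P t (phi h n) x)%:E) = (fun n => \int[p t x]_y (phi h n y)%:E)%E.
    by apply/funext => n; exact: ((hp t t0 x).2.2 _ (CbB _ (Cb_phi n ch))).
  exact: phi_mct.
have coz1 t (t0 : 0 <= t) (A : set E) : Coz R A ->
    measurable_fun [set: BaireSigma R E] (fun x => p t x A).
  move=> [h [ch ->]].
  apply: (@emeasurable_fun_cvg _ (BaireSigma R E) R setT (fun n x => (P t (phi h n) x)%:E)).
    move=> n; apply/measurable_EFinP.
    exact: (Brho_mfun (PB t t0 _ (CbB _ (Cb_phi n ch)))).
  by move=> x _; exact: key.
have cozT : @Coz R E [set: E].
  by exists (cst 1); split; [exact: Cb1 | exact: setT_coz].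
have part1 : forall t, 0 <= t -> forall A : set (BaireSigma R E), measurable A ->
     measurable_fun [set: BaireSigma R E] (fun x : BaireSigma R E => p t x A).
  move=> t t0 A mA.
  have mA' : <<s @Coz R E >> A by rewrite -baire_eq.
  clear mA; move: A mA'.
  apply: (@dynkin_induction _ (BaireSigma R E) (@Coz R E)
    (fun A => measurable_fun [set: BaireSigma R E] (fun x : BaireSigma R E => p t x A))
    (baire_eq R E) (@coz_setI R E)).
  - exact: (coz1 t t0 _ cozT).
  - by move=> A hA; exact: coz1.
  - move=> S mS IH.
    have mSb := baire_borel mS.
    have -> : (fun x => p t x (~` S)) = (fun x => p t x setT - p t x S)%E.
      apply/funext => x; rewrite -setTD measureD//; first by rewrite setTI.
      exact: (hp t t0 x).1.1.
    apply: emeasurable_funB => //.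
    exact: (coz1 t t0 _ cozT).
  - move=> F mF tF IH.
    have -> : (fun x => p t x (\bigcup_k F k)) = (fun x => \sum_(k <oo) p t x (F k))%E.
      apply/funext => x; apply: mu_bigcupT => //.
      move=> i; apply: baire_borel; exact: mF.
    by apply: ge0_emeasurable_sum => // k x _ _.
split => //.
move=> s t s0 t0 x A mA.
have st0 : 0 <= s + t by rewrite addr_ge0.
have mfs (B : set E) : measurable (B : set (BaireSigma R E)) ->
    measurable_fun [set: BorelSigma E] (fun y => p s y B).
  by move=> mB; apply: mfun_baire_borel; exact: part1.
have coz2 (B : set E) : @Coz R E B ->
    forall x, (\int[p t x]_y p s y B = p (s + t)%R x B)%E.
  move=> [h [ch ->]] {}x.
  pose g := fun n y => (P s (phi h n) y)%:E.
  have gE n y : g n y = (\int[p s y]_z (phi h n z)%:E)%E.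
    exact: ((hp s s0 y).2.2 _ (CbB _ (Cb_phi n ch))).
  have mphi n : measurable_fun [set: BorelSigma E] (fun z => (phi h n z)%:E).
    apply/measurable_EFinP; apply: cont_mfun_borel.
    exact: (proj1 (Cb_phi n ch)).
  have mg n : measurable_fun [set: BorelSigma E] (g n).
    apply/measurable_EFinP; apply: mfun_baire_borelR.
    exact: (Brho_mfun (PB s s0 _ (CbB _ (Cb_phi n ch)))).
  have g0 n y : (0 <= g n y)%E.
    by rewrite gE; apply: integral_ge0 => z _; rewrite lee_fin phi_ge0.
  have ndg y : nondecreasing_seq (g ^~ y).
    move=> m n mn; rewrite !gE; apply: ge0_le_integral => //.
    - by move=> z _; rewrite lee_fin phi_ge0.
    - by move=> z _; rewrite lee_fin; exact: phi_nd.
  have L1 := @cvg_monotone_convergence _ (BorelSigma E) R (p t x) setT measurableT g mg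
    (fun n y _ => g0 n y) (fun y _ => ndg y).
  rewrite (_ : (\int[p t x]_(y in setT) limn (g^~ y))%E =
     (\int[p t x]_y p s y [set y | (0 < h y)%R])%E) in L1; last first.
    apply: eq_integral => y _; apply: cvg_lim => //.
    exact: key.
  have L2 : (fun n => \int[p t x]_y g n y)%E @ \oo --> p (s + t)%R x [set y | 0 < h y].
    have -> : (fun n => \int[p t x]_y g n y)%E = (fun n => (P (s + t)%R (phi h n) x)%:E).
      apply/funext => n.
      rewrite (Psg t s t0 s0 _ (CbB _ (Cb_phi n ch))).
      by rewrite ((hp t t0 x).2.2 _ (PB s s0 _ (CbB _ (Cb_phi n ch)))).
    exact: key.
  exact: (cvg_unique _ L1 L2).
have mA' : <<s @Coz R E >> A by rewrite -baire_eq.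
clear mA; move: x; move: A mA'.
apply: (@dynkin_induction _ (BaireSigma R E) (@Coz R E)
    (fun A => forall x, (\int[p t x]_y p s y A = p (s + t)%R x A)%E)
    (baire_eq R E) (@coz_setI R E)).
- exact: (coz2 _ cozT).
- by move=> B hB; exact: coz2.
- move=> S mS IH x.
  have mSb := baire_borel mS.
  have fin : p (s + t)%R x S \is a fin_num.
    rewrite ge0_fin_numE ?measure_ge0//.
    apply: le_lt_trans (hp _ st0 x).1.1.
    by apply: le_measure; rewrite ?inE.
  have e1 : (\int[p t x]_y p s y (~` S) + \int[p t x]_y p s y S = p (s + t)%R x setT)%E.
    rewrite -ge0_integralD //; [|exact: (mfs _ (measurableC mS))|exact: (mfs _ mS)].
    rewrite -(coz2 _ cozT x); apply: eq_integral => y _.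
    rewrite -measureU //; first by rewrite setvU.
    - exact: measurableC.
    - by rewrite setICl.
  have e2 : (p (s + t)%R x (~` S) + p (s + t)%R x S = p (s + t)%R x setT)%E.
    rewrite -measureU //; first by rewrite setvU.
    - exact: measurableC.
    - by rewrite setICl.
  rewrite IH -e2 in e1.
  by rewrite -(addeK (\int[p t x]_y p s y (~` S))%E fin) e1 addeK.
- move=> F mF tF IH x.
  rewrite mu_bigcupT; last 2 first.
    - by move=> i; apply: baire_borel; exact: mF.
    - exact: tF.
  transitivity (\int[p t x]_y \sum_(k <oo) p s y (F k))%E.
    apply: eq_integral => y _; apply: mu_bigcupT => //.
    by move=> i; apply: baire_borel; exact: mF.
  rewrite integral_nneseries //.
    by apply: eq_eseriesr => k _; exact: IH.
  by move=> n; apply: mfs; exact: mF.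
Qed.
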